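(* Let $G_1=(V_1,E_1,\ell_1)$ and $G_2=(V_2,E_2,\ell_2)$ be finite node-labeled directed graphs, let $\mathcal{L}:V_1\times V_2\to[0,1]$ satisfy $\mathcal{L}(u,v)=1$ if and only if $\ell_1(u)=\ell_2(v)$, and let $w^+,w^-$ satisfy $0<w^+$, $0<w^-$, $w^++w^-<1$. Define $F^0=\mathcal{L}$ and, for $k\ge1$, $$F^k(u,v)=w^+A^k(N^+_{G_1}(u),N^+_{G_2}(v))+w^-A^k(N^-_{G_1}(u),N^-_{G_2}(v))+(1-w^+-w^-)\mathcal{L}(u,v),$$ where for $S_1\subseteq V_1$, $S_2\subseteq V_2$: $A^k(S_1,S_2)=1$ if $S_1=S_2=\emptyset$; $A^k(S_1,S_2)=0$ if exactly one of $S_1,S_2$ is empty; and otherwise $$A^k(S_1,S_2)=\frac{1}{\sqrt{|S_1|\,|S_2|}}\max_{g}\sum_{(x,y)\in g}F^{k-1}(x,y),$$ the maximum ranging over all sets $g\subseteq S_1\times S_2$ that are the graph of an injective map from the smaller of $S_1,S_2$ into the larger (if $|S_1|\le|S_2|$, injective maps $S_1\to S_2$; otherwise injective maps $S_2\to S_1$, written as pairs $(x,y)$ with $x\in S_1$, $y\in S_2$). Let $\mathrm{FSim}_{bj}(u,v)=\lim_{k\to\infty}F^k(u,v)$ (the limit exists). Then: (P1) $0\le\mathrm{FSim}_{bj}(u,v)\le1$; (P2) $\mathrm{FSim}_{bj}(u,v)=1$ if and only if $u$ is bijectively simulated by $v$, i.e. there exists a bijective simulation $R\subseteq V_1\times V_2$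 with $(u,v)\in R$; (P3) if moreover $\mathcal{L}(u,v)=\mathcal{L}'(v,u)$ for all $u,v$, where $\mathcal{L}'$ is the label function used when computing the same scheme from $G_2$ to $G_1$, then $\mathrm{FSim}_{bj}(u,v)$ computed from $G_1$ to $G_2$ equals $\mathrm{FSim}_{bj}(v,u)$ computed from $G_2$ to $G_1$ (in particular, when $G_1=G_2$ and $\mathcal{L}$ is symmetric, $\mathrm{FSim}_{bj}(u,v)=\mathrm{FSim}_{bj}(v,u)$).
   Context: $N^+_G(u)=\{u':(u,u')\in E(G)\}$ and $N^-_G(u)=\{u':(u',u)\in E(G)\}$. A relation $R\subseteq V_1\times V_2$ is a bijective simulation if for every $(u,v)\in R$: $\ell_1(u)=\ell_2(v)$; there is a bijection $\lambda_1:N^+_{G_1}(u)\to N^+_{G_2}(v)$ with $(u',\lambda_1(u'))\in R$ for all $u'\in N^+_{G_1}(u)$; and there is a bijection $\lambda_2:N^-_{G_1}(u)\to N^-_{G_2}(v)$ with $(u'',\lambda_2(u''))\in R$ for all $u''\in N^-_{G_1}(u)$. *)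

(* Defs.v *)
From HB Require Import structures.
From mathcomp Require Import all_boot all_order all_algebra.
From mathcomp Require Import all_classical all_reals all_analysis.
Set Implicit Arguments. Unset Strict Implicit. Unset Printing Implicit Defensive.
Import Order.TTheory GRing.Theory Num.Theory.
Local Open Scope ring_scope.

Definition Nout (V : finType) (E : rel V) (u : V) : {set V} := [set u' | E u u'].
Definition Nin (V : finType) (E : rel V) (u : V) : {set V} := [set u' | E u' u].

(* g \subset S1 x S2 is the graph of an injective map from the smaller of S1,S2
   into the larger (ties: injective maps S1 -> S2), written as pairs (x,y)
   with x in S1, y in S2. *)
Definition inj_match (V1 V2 : finType) (S1 : {set V1}) (S2 : {set V2})
  (g : {set V1 * V2}) : bool :=
  [forall p in g, (p.1 \in S1) && (p.2 \in S2)] &&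
  (if #|S1| <= #|S2| then
     [forall x in S1, #|[set y | (x, y) \in g]| == 1] &&
     [forall y in S2, #|[set x | (x, y) \in g]| <= 1]
   else
     [forall y in S2, #|[set x | (x, y) \in g]| == 1] &&
     [forall x in S1, #|[set y | (x, y) \in g]| <= 1])%N.

Definition Asim (R : realType) (V1 V2 : finType) (F : V1 -> V2 -> R)
  (S1 : {set V1}) (S2 : {set V2}) : R :=
  if (S1 == finset.set0) && (S2 == finset.set0) then 1
  else if (S1 == finset.set0) || (S2 == finset.set0) then 0
  else (Num.sqrt (#|S1|%:R * #|S2|%:R))^-1 *
       \big[Num.max/0]_(g : {set V1 * V2} | inj_match S1 S2 g)
          \sum_(p in g) F p.1 p.2.

Fixpoint Fbj (R : realType) (V1 V2 : finType) (E1 : rel V1) (E2 : rel V2)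
  (Lf : V1 -> V2 -> R) (wp wm : R) (k : nat) : V1 -> V2 -> R :=
  match k with
  | 0 => Lf
  | k'.+1 => fun u v =>
      wp * Asim (Fbj E1 E2 Lf wp wm k') (Nout E1 u) (Nout E2 v)
    + wm * Asim (Fbj E1 E2 Lf wp wm k') (Nin E1 u) (Nin E2 v)
    + (1 - wp - wm) * Lf u v
  end.

Definition bij_in_rel (V1 V2 : finType) (Rel : V1 -> V2 -> Prop)
  (S1 : {set V1}) (S2 : {set V2}) : Prop :=
  exists f : V1 -> V2,
    {in S1 &, injective f} /\ f @: S1 = S2 /\ (forall x, x \in S1 -> Rel x (f x)).

Definition bij_simulation (V1 V2 : finType) (Lab : Type)
  (E1 : rel V1) (E2 : rel V2) (l1 : V1 -> Lab) (l2 : V2 -> Lab)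
  (Rel : V1 -> V2 -> Prop) : Prop :=
  forall u v, Rel u v ->
    l1 u = l2 v /\
    bij_in_rel Rel (Nout E1 u) (Nout E2 v) /\
    bij_in_rel Rel (Nin E1 u) (Nin E2 v).

(* Main.v *)
Require Import Defs.
From HB Require Import structures.
From mathcomp Require Import all_boot all_order all_algebra.
From mathcomp Require Import all_classical all_reals all_analysis.
From mathcomp Require Import zify ring lra.
Import Order.TTheory GRing.Theory Num.Theory numFieldNormedType.Exports.

Set Implicit Arguments. Unset Strict Implicit. Unset Printing Implicit Defensive.

Lemma sum_ones (V : finType) (S : {set V}) (c : V -> nat) :
  (forall y, y \in S -> c y <= 1)%N -> (\sum_(y in S) c y)%N = #|S| ->
  forall y, y \in S -> c y = 1%N.
Proof.
move=> Hc Hs.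
have H : (\sum_(y in S) (1 - c y) + \sum_(y in S) c y)%N = #|S|.
  rewrite -big_split /= -sum1_card; apply: eq_bigr => y Hy; rewrite subnK //; exact: Hc.
have H0 : (\sum_(y in S) (1 - c y))%N = 0%N by move: H; rewrite Hs; lia.
move/eqP: H0; rewrite sum_nat_eq0 => /forallP H1 y Hy.
have := H1 y; rewrite Hy /= => /eqP; have := Hc y Hy; lia.
Qed.

Lemma card_g1 (V1 V2 : finType) (S1 : {set V1}) (S2 : {set V2}) (g : {set V1 * V2}) :
  [forall p in g, (p.1 \in S1) && (p.2 \in S2)] ->
  #|g| = (\sum_(x in S1) #|[set y | (x, y) \in g]|)%N.
Proof.
move=> /forallP Hg.
rewrite -sum1_card big_mkcond /=.
rewrite (eq_bigr (fun p : V1 * V2 => (fun x y => if (x, y) \in g then 1 else 0)%N p.1 p.2)); last by case.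
rewrite -(pair_bigA _ (fun x y => if (x, y) \in g then 1 else 0)%N) /=.
rewrite [RHS]big_mkcond /=; apply eq_bigr => x _.
case: ifP => Hx.
  rewrite -sum1_card [RHS]big_mkcond /=; apply: eq_bigr => y _; by rewrite inE.
apply: big1 => y _; case: ifP => // Hxy.
by have := Hg (x, y); rewrite Hxy Hx.
Qed.

Lemma card_g2 (V1 V2 : finType) (S1 : {set V1}) (S2 : {set V2}) (g : {set V1 * V2}) :
  [forall p in g, (p.1 \in S1) && (p.2 \in S2)] ->
  #|g| = (\sum_(y in S2) #|[set x | (x, y) \in g]|)%N.
Proof.
move=> /forallP Hg.
rewrite -sum1_card big_mkcond /=.
rewrite (eq_bigr (fun p : V1 * V2 => (fun x y => if (x, y) \in g then 1 else 0)%N p.1 p.2)); last by case.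
rewrite -(pair_bigA _ (fun x y => if (x, y) \in g then 1 else 0)%N) /=.
rewrite exchange_big /=.
rewrite [RHS]big_mkcond /=; apply eq_bigr => y _.
case: ifP => Hy.
  rewrite -sum1_card [RHS]big_mkcond /=; apply: eq_bigr => x _; by rewrite inE.
apply: big1 => x _; case: ifP => // Hxy.
by have := Hg (x, y); rewrite Hxy Hy andbF.
Qed.

Lemma match_card (V1 V2 : finType) (S1 : {set V1}) (S2 : {set V2}) (g : {set V1 * V2}) :
  inj_match S1 S2 g -> #|g| = minn #|S1| #|S2|.
Proof.
move/andP=> [Hsub]; case: ifP => Hle /andP[/forallP Ha /forallP Hb].
- have E1 : #|g| = #|S1|.
    rewrite (card_g1 Hsub) -sum1_card; apply: eq_bigr => x Hx.
    by have := Ha x; rewrite Hx => /eqP.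
  have E2 : #|g| <= #|S2|.
    rewrite (card_g2 Hsub) -sum1_card; apply: leq_sum => y Hy.
    by have := Hb y; rewrite Hy.
  rewrite /minn; case: ifP; lia.
- have E1 : #|g| = #|S2|.
    rewrite (card_g2 Hsub) -sum1_card; apply: eq_bigr => x Hx.
    by have := Ha x; rewrite Hx => /eqP.
  rewrite /minn; case: ifP; lia.
Qed.

Lemma tie_lem (V1 V2 : finType) (S1 : {set V1}) (S2 : {set V2}) (g : {set V1 * V2}) :
  [forall p in g, (p.1 \in S1) && (p.2 \in S2)] -> #|S1| = #|S2| ->
  ([forall x in S1, #|[set y | (x, y) \in g]| == 1] &&
   [forall y in S2, #|[set x | (x, y) \in g]| <= 1]) =
  ([forall y in S2, #|[set x | (x, y) \in g]| == 1] &&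
   [forall x in S1, #|[set y | (x, y) \in g]| <= 1]).
Proof.
move=> Hsub Hc.
apply/andP/andP => [[/forallP Ha /forallP Hb] | [/forallP Ha /forallP Hb]]; split.
- have E1 : #|g| = #|S1|.
    rewrite (card_g1 Hsub) -sum1_card; apply: eq_bigr => x Hx.
    by have := Ha x; rewrite Hx => /eqP.
  apply/forallP => y; apply/implyP => Hy; apply/eqP.
  apply: (@sum_ones _ S2 (fun y => #|[set x | (x, y) \in g]|)) => //.
    by move=> z Hz; have := Hb z; rewrite Hz.
  by rewrite -(card_g2 Hsub) E1.
- apply/forallP => x; apply/implyP => Hx; have := Ha x; rewrite Hx => /eqP ->; done.
- have E1 : #|g| = #|S2|.
    rewrite (card_g2 Hsub) -sum1_card; apply: eq_bigr => x Hx.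
    by have := Ha x; rewrite Hx => /eqP.
  apply/forallP => y; apply/implyP => Hy; apply/eqP.
  apply: (@sum_ones _ S1 (fun y => #|[set x | (y, x) \in g]|)) => //.
    by move=> z Hz; have := Hb z; rewrite Hz.
  by rewrite -(card_g1 Hsub) E1.
- apply/forallP => x; apply/implyP => Hx; have := Ha x; rewrite Hx => /eqP ->; done.
Qed.

Definition sws (A B : finType) (g : {set A * B}) : {set B * A} := [set (p.2, p.1) | p in g].

Lemma mem_sws (A B : finType) (g : {set A * B}) x y : ((y, x) \in sws g) = ((x, y) \in g).
Proof.
apply/imsetP/idP => [[[a b] Hab [-> ->]] // | H]; by exists (x, y).
Qed.

Lemma swsK (A B : finType) : cancel (@sws A B) (@sws B A).
Proof. move=> g; apply/setP. move=> [x y]. by rewrite !mem_sws. Qed.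

Lemma inj_match_sws (V1 V2 : finType) (S1 : {set V1}) (S2 : {set V2}) (g : {set V1 * V2}) :
  inj_match S2 S1 (sws g) = inj_match S1 S2 g.
Proof.
have Hs : [forall p in sws g, (p.1 \in S2) && (p.2 \in S1)] =
          [forall p in g, (p.1 \in S1) && (p.2 \in S2)].
  apply/forallP/forallP => H [a b] /=; apply/implyP => Hab.
    by have := H (b, a); rewrite /= mem_sws Hab /= andbC.
  by move: Hab; case/imsetP => [[c d] Hcd [-> ->]]; have := H (c, d); rewrite Hcd /= andbC.
have E1 : forall x : V2, [set y | (x, y) \in sws g] = [set y | (y, x) \in g].
  by move=> x; apply/setP => y; rewrite !inE mem_sws.
have E2 : forall y : V1, [set x | (x, y) \in sws g] = [set x | (y, x) \in g].
  by move=> y; apply/setP => x; rewrite !inE mem_sws.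
rewrite /inj_match Hs.
have -> : [forall x in S2, #|[set y | (x, y) \in sws g]| == 1] =
          [forall y in S2, #|[set x | (x, y) \in g]| == 1].
  by apply: eq_forallb => x; rewrite E1.
have -> : [forall x in S2, #|[set y | (x, y) \in sws g]| <= 1] =
          [forall y in S2, #|[set x | (x, y) \in g]| <= 1].
  by apply: eq_forallb => x; rewrite E1.
have -> : [forall y in S1, #|[set x | (x, y) \in sws g]| == 1] =
          [forall x in S1, #|[set y | (x, y) \in g]| == 1].
  by apply: eq_forallb => x; rewrite E2.
have -> : [forall y in S1, #|[set x | (x, y) \in sws g]| <= 1] =
          [forall x in S1, #|[set y | (x, y) \in g]| <= 1].
  by apply: eq_forallb => x; rewrite E2.
case Hsub: [forall p in g, (p.1 \in S1) && (p.2 \in S2)] => //=.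
case: (ltngtP #|S1| #|S2|) => H.
- by [].
- by [].
- by rewrite (tie_lem Hsub H).
Qed.

Local Open Scope ring_scope.

Lemma min_le_sqrt (R : realType) (a b : nat) :
  (minn a b)%:R <= Num.sqrt (a%:R * b%:R : R).
Proof.
rewrite -[X in X <= _](@ger0_norm R) // -sqrtr_sqr.
apply: ler_wsqrtr; rewrite -natrX -natrM ler_nat.
rewrite expnS expn1; apply: leq_mul; [exact: geq_minl | exact: geq_minr].
Qed.

Lemma Asim_sym (R : realType) (V1 V2 : finType) (F : V1 -> V2 -> R) (G : V2 -> V1 -> R)
  (HFG : forall x y, F x y = G y x) S1 S2 : Asim G S2 S1 = Asim F S1 S2.
Proof.
rewrite /Asim andbC orbC [_%:R * _%:R]mulrC.
case: ifP => // _; case: ifP => // _; congr (_ * _).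
rewrite (reindex (@sws V1 V2)) /=; last first.
  by exists (@sws V2 V1) => g _; apply: swsK.
apply: eq_big => g; first by rewrite inj_match_sws.
move=> _; rewrite big_imset /=; last by move=> [a b] [c d] _ _ [-> ->].
by apply: eq_bigr => p _; rewrite HFG.
Qed.

Lemma Fbj_sym (R : realType) (V1 V2 : finType) (E1 : rel V1) (E2 : rel V2)
  (Lf : V1 -> V2 -> R) (Lf' : V2 -> V1 -> R) (H : forall u v, Lf u v = Lf' v u) wp wm k u v :
  Fbj E2 E1 Lf' wp wm k v u = Fbj E1 E2 Lf wp wm k u v.
Proof.
elim: k u v => [|k IH] u v /=; first by rewrite H.
by rewrite !(@Asim_sym R V1 V2 (Fbj E1 E2 Lf wp wm k) (Fbj E2 E1 Lf' wp wm k)) // H.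
Qed.

Lemma sqrt_gt0 (R : realType) (V1 V2 : finType) (S1 : {set V1}) (S2 : {set V2}) :
  S1 != finset.set0 -> S2 != finset.set0 -> 0 < Num.sqrt (#|S1|%:R * #|S2|%:R : R).
Proof.
move=> H1 H2; rewrite sqrtr_gt0 mulr_gt0 // ltr0n lt0n cards_eq0 //.
Qed.

Lemma sum_le_card (R : realType) (V1 V2 : finType) (F : V1 -> V2 -> R)
  (HF : forall x y, F x y <= 1) (g : {set V1 * V2}) :
  \sum_(p in g) F p.1 p.2 <= #|g|%:R.
Proof.
rewrite -sum1_card natr_sum; apply: ler_sum => p _; exact: HF.
Qed.

Lemma Asim_bnd (R : realType) (V1 V2 : finType) (F : V1 -> V2 -> R)
  (HF : forall x y, 0 <= F x y <= 1) S1 S2 : 0 <= Asim F S1 S2 <= 1.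
Proof.
rewrite /Asim; case: ifP => [_|]; first by rewrite ler01 lexx.
case: ifP => [_ _|]; first by rewrite lexx ler01.
move=> /norP [H1 H2] _.
have Hs := sqrt_gt0 R H1 H2.
set s := Num.sqrt _ in Hs *.
have HM : \big[Num.max/0]_(g | inj_match S1 S2 g) \sum_(p in g) F p.1 p.2 <= s.
  apply: bigmax_le; first exact: ltW.
  move=> g Hg; apply: le_trans (sum_le_card _ _) _.
    by move=> x y; case/andP: (HF x y).
  by rewrite (match_card Hg) min_le_sqrt.
have HM0 : 0 <= \big[Num.max/0]_(g | inj_match S1 S2 g) \sum_(p in g) F p.1 p.2.
  exact: bigmax_ge_id.
apply/andP; split; first by rewrite mulr_ge0 // invr_ge0 ltW.
rewrite -(mulVf (lt0r_neq0 Hs)); apply: ler_wpM2l => //; by rewrite invr_ge0 ltW.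
Qed.

Lemma bigmax_shift (R : realType) (T : finType) (P : pred T) (f1 f2 : T -> R) c :
  0 <= c -> (forall g, P g -> f1 g <= f2 g + c) ->
  \big[Num.max/0]_(g | P g) f1 g <= \big[Num.max/0]_(g | P g) f2 g + c.
Proof.
move=> c0 H; apply: bigmax_le.
  by apply: addr_ge0 => //; exact: bigmax_ge_id.
move=> g Pg; apply: le_trans (H g Pg) _; rewrite lerD2r.
exact: le_bigmax_cond.
Qed.

Lemma sum_shift (R : realType) (V1 V2 : finType) (F G : V1 -> V2 -> R) d
  (Hd : forall x y, `|F x y - G x y| <= d) (g : {set V1 * V2}) :
  \sum_(p in g) F p.1 p.2 <= \sum_(p in g) G p.1 p.2 + #|g|%:R * d.
Proof.
have -> : #|g|%:R * d = \sum_(p in g) d by rewrite sumr_const mulr_natl.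
rewrite -big_split /=; apply: ler_sum => p _.
have := Hd p.1 p.2; have := ler_norm (F p.1 p.2 - G p.1 p.2); lra.
Qed.

Lemma Asim_lip (R : realType) (V1 V2 : finType) (F G : V1 -> V2 -> R) d
  (Hd : forall x y, `|F x y - G x y| <= d) (d0 : 0 <= d) S1 S2 :
  `|Asim F S1 S2 - Asim G S1 S2| <= d.
Proof.
rewrite /Asim; case: ifP => [_|]; first by rewrite subrr normr0.
case: ifP => [_ _|]; first by rewrite subrr normr0.
move=> /norP [H1 H2] _.
have Hs := sqrt_gt0 R H1 H2.
set s := Num.sqrt _ in Hs *.
have Hg : forall (F G : V1 -> V2 -> R), (forall x y, `|F x y - G x y| <= d) ->
  \big[Num.max/0]_(g | inj_match S1 S2 g) \sum_(p in g) F p.1 p.2 <=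
  \big[Num.max/0]_(g | inj_match S1 S2 g) \sum_(p in g) G p.1 p.2 + s * d.
  move=> F' G' Hd'; apply: bigmax_shift; first by rewrite mulr_ge0 // ltW.
  move=> g Hm; apply: le_trans (sum_shift Hd' g) _; rewrite lerD2l.
  by apply: ler_wpM2r => //; rewrite (match_card Hm) min_le_sqrt.
have H1' := Hg F G Hd.
have H2' : \big[Num.max/0]_(g | inj_match S1 S2 g) \sum_(p in g) G p.1 p.2 <=
  \big[Num.max/0]_(g | inj_match S1 S2 g) \sum_(p in g) F p.1 p.2 + s * d.
  by apply: Hg => x y; rewrite distrC.
rewrite -mulrBr normrM ger0_norm; last by rewrite invr_ge0 ltW.
rewrite ler_pdivrMl //.
rewrite ler_norml; apply/andP; split; lra.
Qed.


Definition Tm (R : realType) (V1 V2 : finType) (E1 : rel V1) (E2 : rel V2) (Lf : V1 -> V2 -> R)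
  (wp wm : R) (F : V1 -> V2 -> R) : V1 -> V2 -> R := fun u v =>
      wp * Asim F (Nout E1 u) (Nout E2 v)
    + wm * Asim F (Nin E1 u) (Nin E2 v)
    + (1 - wp - wm) * Lf u v.

Lemma FS (R : realType) (V1 V2 : finType) (E1 : rel V1) (E2 : rel V2) (Lf : V1 -> V2 -> R)
  (wp wm : R) k : Fbj E1 E2 Lf wp wm k.+1 = Tm E1 E2 Lf wp wm (Fbj E1 E2 Lf wp wm k).
Proof. by []. Qed.

Lemma Tm_bnd (R : realType) (V1 V2 : finType) (E1 : rel V1) (E2 : rel V2) (Lf : V1 -> V2 -> R)
  (wp wm : R) (HL01 : forall u v, 0 <= Lf u v <= 1) (Hwp : 0 < wp) (Hwm : 0 < wm) (Hw : wp + wm < 1)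
  (G : V1 -> V2 -> R) : (forall x y, 0 <= G x y <= 1) -> forall u v, 0 <= Tm E1 E2 Lf wp wm G u v <= 1.
Proof.
move=> HG u v; rewrite /Tm.
have /andP[a1 a2] := Asim_bnd HG (Nout E1 u) (Nout E2 v).
have /andP[b1 b2] := Asim_bnd HG (Nin E1 u) (Nin E2 v).
have /andP[l1 l2] := HL01 u v.
have c0 : 0 < 1 - wp - wm by lra.
have p1 := mulr_ge0 (ltW Hwp) a1. have p2 := mulr_ge0 (ltW Hwm) b1.
have p3 := mulr_ge0 (ltW c0) l1.
have q1 : wp * Asim G (Nout E1 u) (Nout E2 v) <= wp by rewrite ler_piMr // ltW.
have q2 : wm * Asim G (Nin E1 u) (Nin E2 v) <= wm by rewrite ler_piMr // ltW.
have q3 : (1 - wp - wm) * Lf u v <= 1 - wp - wm by rewrite ler_piMr // ltW.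
apply/andP; split; lra.
Qed.

Lemma F_bnd (R : realType) (V1 V2 : finType) (E1 : rel V1) (E2 : rel V2) (Lf : V1 -> V2 -> R)
  (wp wm : R) (HL01 : forall u v, 0 <= Lf u v <= 1) (Hwp : 0 < wp) (Hwm : 0 < wm) (Hw : wp + wm < 1)
  k u v : 0 <= Fbj E1 E2 Lf wp wm k u v <= 1.
Proof.
elim: k u v => [|k IH] u v; first exact: HL01.
by rewrite FS; apply: Tm_bnd.
Qed.

Lemma Tm_lip (R : realType) (V1 V2 : finType) (E1 : rel V1) (E2 : rel V2) (Lf : V1 -> V2 -> R)
  (wp wm : R) (Hwp : 0 < wp) (Hwm : 0 < wm)
  (G H : V1 -> V2 -> R) (d : R) : (forall x y, `|G x y - H x y| <= d) -> 0 <= d ->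
  forall u v, `|Tm E1 E2 Lf wp wm G u v - Tm E1 E2 Lf wp wm H u v| <= (wp + wm) * d.
Proof.
move=> Hd d0 u v; rewrite /Tm.
have := Asim_lip Hd d0 (Nout E1 u) (Nout E2 v); rewrite ler_norml => /andP[a1 a2].
have := Asim_lip Hd d0 (Nin E1 u) (Nin E2 v); rewrite ler_norml => /andP[b1 b2].
rewrite ler_norml; apply/andP; split; nra.
Qed.

Lemma F_step (R : realType) (V1 V2 : finType) (E1 : rel V1) (E2 : rel V2) (Lf : V1 -> V2 -> R)
  (wp wm : R) (HL01 : forall u v, 0 <= Lf u v <= 1) (Hwp : 0 < wp) (Hwm : 0 < wm) (Hw : wp + wm < 1)
  k u v : `|Fbj E1 E2 Lf wp wm k.+1 u v - Fbj E1 E2 Lf wp wm k u v| <= (wp + wm) ^+ k.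
Proof.
elim: k u v => [|k IH] u v.
  rewrite expr0 ler_norml.
  have := F_bnd E1 E2 HL01 Hwp Hwm Hw 1 u v; have := F_bnd E1 E2 HL01 Hwp Hwm Hw 0 u v.
  move=> /andP[? ?] /andP[? ?]; apply/andP; split; lra.
rewrite exprS FS [Fbj _ _ _ _ _ k.+1]FS; apply: Tm_lip => //.
exact: exprn_ge0 (addr_ge0 (ltW Hwp) (ltW Hwm)).
Qed.

Lemma geo_cvg (R : realType) (c : R) (f : nat -> R) : 0 <= c -> c < 1 ->
  (forall k, `|f k.+1 - f k| <= c ^+ k) -> (forall k, 0 <= f k) ->
  exists l, (f @ \oo --> l)%classic /\ forall k, `|f k - l| <= c ^+ k / (1 - c).
Proof.
move=> c0 c1 Hs Hf0.
pose e := fun k => c ^+ k / (1 - c).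
have c1' : 1 - c != 0 by rewrite subr_eq0 eq_sym lt_eqF.
have He : forall k, e k - e k.+1 = c ^+ k.
  move=> k; rewrite /e exprS; field; exact: c1'.
have e0 : forall k, 0 <= e k.
  by move=> k; rewrite /e divr_ge0 // ?exprn_ge0 // subr_ge0 ltW.
have Hst : forall k, f k.+1 - f k <= c ^+ k /\ f k - f k.+1 <= c ^+ k.
  move=> k; have := Hs k; rewrite ler_norml => /andP[? ?]; split; lra.
pose G := fun k => f k + e k.
have Gni : nonincreasing_seq G.
  apply/nonincreasing_seqP => k; rewrite /G.
  have := He k; have := Hst k; case=> ? ?; lra.
have Glb : has_lbound (range G).
  exists 0 => _ [n _ <-]; rewrite /G; exact: addr_ge0.
have cvG := nonincreasing_cvgn Gni Glb.
set l := inf _ in cvG.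
have cve : (e @ \oo --> 0)%classic.
  have := @cvgMr_tmp R _ _ _ (GRing.exp c) 0 (1 - c)^-1 (cvg_expr _).
  rewrite mul0r; apply; rewrite ger0_norm //.
have Hfe : f = G - e by apply: funext => k; rewrite /G /= addrK.
have cvf : (f @ \oo --> l)%classic.
  rewrite Hfe -[l]subr0; exact: cvgB.
exists l; split => // k.
have limG : limn G = l by apply: cvg_lim.
have H1 : l <= G k by rewrite -limG; apply: nonincreasing_cvgn_ge => //; exact: cvgP cvG.
pose H := fun k => f k - e k.
have Hnd : nondecreasing_seq H.
  apply/nondecreasing_seqP => j; rewrite /H.
  have := He j; have := Hst j; case=> ? ?; lra.
have cvH : (H @ \oo --> l)%classic by rewrite -[l]subr0; exact: cvgB.
have limH : limn H = l by apply: cvg_lim.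
have H2 : H k <= l by rewrite -limH; apply: nondecreasing_cvgn_le => //; exact: cvgP cvH.
move: H1 H2; rewrite /G /H /= ler_norml -/(e k) => ? ?; apply/andP; split; lra.
Qed.

Lemma cvg_e (R : realType) (c : R) : 0 <= c -> c < 1 ->
  ((fun k => 2 * (c ^+ k / (1 - c))) @ \oo --> 0)%classic.
Proof.
move=> c0 c1.
have := @cvgMr_tmp R _ _ _ (GRing.exp c) 0 (1 - c)^-1 (cvg_expr _).
rewrite mul0r => /(_ _) H.
have := @cvgMl_tmp R _ _ _ (fun k => c ^+ k / (1 - c)) 2 0 (H _).
by rewrite mulr0; apply; rewrite ger0_norm.
Qed.

Lemma F_lim (R : realType) (V1 V2 : finType) (E1 : rel V1) (E2 : rel V2) (Lf : V1 -> V2 -> R)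
  (wp wm : R) (HL01 : forall u v, 0 <= Lf u v <= 1) (Hwp : 0 < wp) (Hwm : 0 < wm) (Hw : wp + wm < 1) :
  let L := fun u v => limn (fun k => Fbj E1 E2 Lf wp wm k u v) in
  (forall u v, cvgn (fun k => Fbj E1 E2 Lf wp wm k u v)) /\
  (forall u v, 0 <= L u v <= 1) /\
  (forall u v, Tm E1 E2 Lf wp wm L u v = L u v).
Proof.
move=> L.
have c0 : 0 <= wp + wm by apply: addr_ge0; apply: ltW.
have Hb : forall u v, ((fun k => Fbj E1 E2 Lf wp wm k u v) @ \oo --> L u v)%classic /\
   forall k, `|Fbj E1 E2 Lf wp wm k u v - L u v| <= (wp + wm) ^+ k / (1 - (wp + wm)).
  move=> u v.
  have [l [Hl Hk]] := @geo_cvg R (wp + wm) (fun k => Fbj E1 E2 Lf wp wm k u v) c0 Hw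
    (fun k => F_step E1 E2 HL01 Hwp Hwm Hw k u v)
    (fun k => proj1 (andP (F_bnd E1 E2 HL01 Hwp Hwm Hw k u v))).
  have -> : L u v = l by apply: cvg_lim.
  by split.
have Hc : forall u v, cvgn (fun k => Fbj E1 E2 Lf wp wm k u v).
  by move=> u v; apply: cvgP (proj1 (Hb u v)).
split => //; split.
  move=> u v; apply/andP; split.
    apply: limr_ge; first exact: Hc.
    by apply: nearW => k; have /andP[] := F_bnd E1 E2 HL01 Hwp Hwm Hw k u v.
  apply: limr_le; first exact: Hc.
  by apply: nearW => k; have /andP[] := F_bnd E1 E2 HL01 Hwp Hwm Hw k u v.
move=> u v; apply/eqP; rewrite -subr_eq0 -normr_le0.
set x := `|_|.
have Hx : forall k, x <= 2 * ((wp + wm) ^+ k / (1 - (wp + wm))).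
  move=> k.
  have e0 : 0 <= (wp + wm) ^+ k / (1 - (wp + wm)).
    by rewrite divr_ge0 ?exprn_ge0 // subr_ge0 ltW.
  have H1 : `|Tm E1 E2 Lf wp wm (Fbj E1 E2 Lf wp wm k) u v - Tm E1 E2 Lf wp wm L u v|
      <= (wp + wm) * ((wp + wm) ^+ k / (1 - (wp + wm))).
    apply: Tm_lip => // a b; exact: (proj2 (Hb a b)).
  have H2 := proj2 (Hb u v) k.+1.
  rewrite -FS in H1.
  have H3 : (wp + wm) ^+ k.+1 / (1 - (wp + wm)) <= (wp + wm) ^+ k / (1 - (wp + wm)).
    rewrite exprS -mulrA ler_piMl //; exact: ltW.
  have H4 : (wp + wm) * ((wp + wm) ^+ k / (1 - (wp + wm))) <= (wp + wm) ^+ k / (1 - (wp + wm)).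
    rewrite ler_piMl //; exact: ltW.
  rewrite /x.
  have := ler_distD (Fbj E1 E2 Lf wp wm k.+1 u v) (Tm E1 E2 Lf wp wm L u v) (L u v).
  rewrite distrC in H1.
  lra.
have Hl : x <= limn (fun k => 2 * ((wp + wm) ^+ k / (1 - (wp + wm)))).
  apply: limr_ge; [exact: cvgP (cvg_e c0 Hw) | exact: nearW Hx].
have Hl0 : limn (fun k => 2 * ((wp + wm) ^+ k / (1 - (wp + wm)))) = 0.
  by apply: cvg_lim => //; exact: cvg_e.
by rewrite Hl0 in Hl.
Qed.

Lemma match_of_bij (V1 V2 : finType) (S1 : {set V1}) (S2 : {set V2}) (f : V1 -> V2) :
  {in S1 &, injective f} -> f @: S1 = S2 -> inj_match S1 S2 [set (x, f x) | x in S1].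
Proof.
move=> Hinj Himg.
have Hc : #|S1| = #|S2| by rewrite -Himg card_in_imset.
have mem : forall x y, ((x, y) \in [set (x, f x) | x in S1]) = (x \in S1) && (y == f x).
  move=> x y; apply/imsetP/andP => [[x' Hx' [-> ->]] | [Hx /eqP ->]]; [by split|by exists x].
rewrite /inj_match Hc leqnn; apply/and3P; split.
- apply/forallP => -[x y]; apply/implyP; rewrite mem => /andP[Hx /eqP ->] /=.
  by rewrite Hx -Himg imset_f.
- apply/forallP => x; apply/implyP => Hx; apply/cards1P; exists (f x).
  by apply/setP => y; rewrite [in LHS]finset.in_set mem finset.in_set1 Hx.
- apply/forallP => y; apply/implyP => Hy; apply/card_le1_eqP => x1 x2.
  rewrite !finset.in_set !mem => /andP[H1 /eqP E1] /andP[H2 /eqP E2].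
  by apply: Hinj => //; rewrite -E1 -E2.
Qed.

Lemma Asim_one (R : realType) (V1 V2 : finType) (F : V1 -> V2 -> R)
  (HF : forall x y, 0 <= F x y <= 1) (S1 : {set V1}) (S2 : {set V2}) (f : V1 -> V2) :
  {in S1 &, injective f} -> f @: S1 = S2 -> (forall x, x \in S1 -> F x (f x) = 1) ->
  Asim F S1 S2 = 1.
Proof.
move=> Hinj Himg Hone.
have Hc : #|S1| = #|S2| by rewrite -Himg card_in_imset.
rewrite /Asim.
case: (boolP (S1 == finset.set0)) => [/eqP E|H1].
  have -> : S2 == finset.set0 by rewrite -Himg E imset0.
  by [].
have H2 : S2 != finset.set0 by rewrite -cards_eq0 -Hc cards_eq0.
rewrite (negbTE H2) /=.
have Hs := sqrt_gt0 R H1 H2.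
set s := Num.sqrt _ in Hs *.
have sE : s = #|S1|%:R by rewrite /s -Hc -expr2 sqrtr_sqr ger0_norm.
have HM : \big[Num.max/0]_(g | inj_match S1 S2 g) \sum_(p in g) F p.1 p.2 <= s.
  apply: bigmax_le; first exact: ltW.
  move=> g Hg; apply: le_trans (sum_le_card _ _) _.
    by move=> x y; case/andP: (HF x y).
  by rewrite (match_card Hg) min_le_sqrt.
have HM2 : s <= \big[Num.max/0]_(g | inj_match S1 S2 g) \sum_(p in g) F p.1 p.2.
  apply: (@bigmax_sup _ _ _ _ [set (x, f x) | x in S1]); first exact: match_of_bij.
  rewrite big_imset /=; last by move=> a b _ _ [].
  rewrite (eq_bigr (fun _ => 1)); last by move=> x Hx; rewrite Hone.
  by rewrite sumr_const sE.
have -> : \big[Num.max/0]_(g | inj_match S1 S2 g) \sum_(p in g) F p.1 p.2 = s.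
  by apply/eqP; rewrite eq_le HM HM2.
by rewrite mulVf // lt0r_neq0.
Qed.

Lemma Asim_one_inv (R : realType) (V1 V2 : finType) (F : V1 -> V2 -> R)
  (HF : forall x y, 0 <= F x y <= 1) (S1 : {set V1}) (S2 : {set V2}) (y0 : V2) :
  Asim F S1 S2 = 1 -> bij_in_rel (fun x y => F x y = 1) S1 S2.
Proof.
rewrite /Asim.
case: (boolP (S1 == finset.set0)) => [/eqP E1|H1];
  case: (boolP (S2 == finset.set0)) => [/eqP E2|H2] /=.
- move=> _; exists (fun _ => y0); split; first by move=> x y; rewrite E1 inE.
  split; first by rewrite E1 E2 imset0.
  by move=> x; rewrite E1 inE.
- by move/eqP; rewrite eq_sym oner_eq0.
- by move/eqP; rewrite eq_sym oner_eq0.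
move=> HA.
have Hs := sqrt_gt0 R H1 H2.
move: HA; set s := Num.sqrt _ in Hs *.
set M := \big[Num.max/0]_(g | inj_match S1 S2 g) \sum_(p in g) F p.1 p.2 => HA.
have Hms : M = s.
  move: HA => /(congr1 (fun t => s * t)); rewrite mulr1 mulrA mulfV ?mul1r //.
  exact: lt0r_neq0.
case: (boolP [exists g, inj_match S1 S2 g && (s <= \sum_(p in g) F p.1 p.2)]);
  last first.
  move=> /existsPn Hn; exfalso.
  have : M < s.
    apply: bigmax_lt => // g Hg; have := Hn g; rewrite Hg /= -ltNge; done.
  by rewrite Hms ltxx.
move=> /existsP [g /andP [Hg Hge]].
have Hle : \sum_(p in g) F p.1 p.2 <= #|g|%:R.
  by apply: sum_le_card => x y; case/andP: (HF x y).
have Hgs : #|g|%:R <= s by rewrite (match_card Hg) min_le_sqrt.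
have Eg : #|g|%:R = s by apply/eqP; rewrite eq_le Hgs (le_trans Hge Hle).
have Hsum : \sum_(p in g) F p.1 p.2 = #|g|%:R by apply/eqP; rewrite eq_le Hle Eg Hge.
have Hone : forall p, p \in g -> F p.1 p.2 = 1.
  have : \sum_(p in g) (1 - F p.1 p.2) = 0 by rewrite sumrB sumr_const Hsum subrr.
  move/psumr_eq0P => H p Hp.
  have : 1 - F p.1 p.2 = 0.
    apply: H => // q _; have /andP[_ ?] := HF q.1 q.2; lra.
  lra.
have Hc : #|S1| = #|S2|.
  have E2 : (#|g| * #|g|)%:R = (#|S1| * #|S2|)%:R :> R.
    rewrite !natrM -expr2 Eg /s sqr_sqrtr //; exact: mulr_ge0.
  move/eqP: E2; rewrite eqr_nat => /eqP E2.
  have Em := match_card Hg.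
  have p1 : (0 < #|S1|)%N by rewrite lt0n cards_eq0.
  have p2 : (0 < #|S2|)%N by rewrite lt0n cards_eq0.
  move: E2; rewrite Em /minn; case: ltnP => Hlt E2; nia.
move: Hg; rewrite /inj_match Hc leqnn => /and3P [/forallP Hsub /forallP Ha /forallP Hb].
pose f := fun x => if [pick y | (x, y) \in g] is Some y then y else y0.
have HfG : forall x, x \in S1 -> (x, f x) \in g.
  move=> x Hx; rewrite /f; case: pickP => [y //|Hn].
  have := Ha x; rewrite Hx /= => /eqP.
  have -> : [set y | (x, y) \in g] = finset.set0 by apply/setP => y; rewrite !inE Hn.
  by rewrite cards0.
have HS2 : forall x, x \in S1 -> f x \in S2.
  by move=> x Hx; have := Hsub (x, f x); rewrite HfG //= => /andP[].
have Hinj : {in S1 &, injective f}.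
  move=> x1 x2 Hx1 Hx2 Heq.
  have := Hb (f x1); rewrite HS2 //= => /card_le1_eqP; apply; rewrite inE; [rewrite Heq; exact: HfG | exact: HfG].
exists f; split => //; split.
  apply/eqP; rewrite eqEcard; apply/andP; split.
    by apply/fintype.subsetP => y /imsetP [x Hx ->]; exact: HS2.
  by rewrite card_in_imset // Hc.
by move=> x Hx; exact: (Hone (x, f x) (HfG x Hx)).
Qed.

Lemma sim_F1 (R : realType) (V1 V2 : finType) (Lab : Type)
  (E1 : rel V1) (E2 : rel V2) (l1 : V1 -> Lab) (l2 : V2 -> Lab)
  (Lf : V1 -> V2 -> R)
  (HL01 : forall u v, 0 <= Lf u v <= 1)
  (HL1 : forall u v, Lf u v = 1 <-> l1 u = l2 v)
  (wp wm : R) (Hwp : 0 < wp) (Hwm : 0 < wm) (Hw : wp + wm < 1)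
  (Rel : V1 -> V2 -> Prop) (Hs : bij_simulation E1 E2 l1 l2 Rel) :
  forall k u v, Rel u v -> Fbj E1 E2 Lf wp wm k u v = 1.
Proof.
elim=> [|k IH] u v.
  by move=> /Hs [Hl _]; apply/HL1.
move=> /Hs [Hl [[f [Hi [Hm HR]]] [g [Hi' [Hm' HR']]]]].
rewrite FS /Tm.
rewrite (@Asim_one _ _ _ _ (F_bnd E1 E2 HL01 Hwp Hwm Hw k) _ _ f Hi Hm); last first.
  by move=> x Hx; apply: IH; apply: HR.
rewrite (@Asim_one _ _ _ _ (F_bnd E1 E2 HL01 Hwp Hwm Hw k) _ _ g Hi' Hm'); last first.
  by move=> x Hx; apply: IH; apply: HR'.
have -> : Lf u v = 1 by apply/HL1.
ring.
Qed.

Unset Implicit Arguments.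

Theorem theorem3 (R : realType) (V1 V2 : finType) (Lab : Type)
  (E1 : rel V1) (E2 : rel V2) (l1 : V1 -> Lab) (l2 : V2 -> Lab)
  (Lf : V1 -> V2 -> R)
  (HL01 : forall u v, 0 <= Lf u v <= 1)
  (HL1 : forall u v, Lf u v = 1 <-> l1 u = l2 v)
  (wp wm : R) (Hwp : 0 < wp) (Hwm : 0 < wm) (Hw : wp + wm < 1) :
  (forall (u : V1) (v : V2),
     cvgn (fun k => Fbj E1 E2 Lf wp wm k u v) /\
     0 <= limn (fun k => Fbj E1 E2 Lf wp wm k u v) <= 1 /\
     (limn (fun k => Fbj E1 E2 Lf wp wm k u v) = 1 <->
        exists Rel : V1 -> V2 -> Prop,
          bij_simulation E1 E2 l1 l2 Rel /\ Rel u v)) /\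
  (forall Lf' : V2 -> V1 -> R, (forall u v, Lf u v = Lf' v u) ->
     forall (u : V1) (v : V2),
       limn (fun k => Fbj E1 E2 Lf wp wm k u v) =
       limn (fun k => Fbj E2 E1 Lf' wp wm k v u)).
Proof.
split; last first.
  move=> Lf' HLL u v; congr (limn _); apply: funext => k.
  by rewrite (Fbj_sym _ _ HLL).
move=> u v.
have [Hc [Hb Hfix]] := F_lim E1 E2 HL01 Hwp Hwm Hw.
split; first exact: Hc.
split; first exact: Hb.
split.
- move=> H1.
  exists (fun x y => limn (fun k => Fbj E1 E2 Lf wp wm k x y) = 1); split => //.
  move=> x y Hxy.
  set L := fun x y => limn (fun k => Fbj E1 E2 Lf wp wm k x y).
  have HLb : forall x y, 0 <= L x y <= 1 by exact: Hb.
  have Hf := Hfix x y; rewrite /= Hxy /Tm in Hf.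
  have /andP[a1 a2] := Asim_bnd HLb (Nout E1 x) (Nout E2 y).
  have /andP[b1 b2] := Asim_bnd HLb (Nin E1 x) (Nin E2 y).
  have /andP[c1 c2] := HL01 x y.
  set A1 := Asim _ (Nout E1 x) (Nout E2 y) in Hf a1 a2.
  set A2 := Asim _ (Nin E1 x) (Nin E2 y) in Hf b1 b2.
  have t1' : 0 <= wp * (1 - A1) by apply: mulr_ge0; [exact: ltW | lra].
  have t2' : 0 <= wm * (1 - A2) by apply: mulr_ge0; [exact: ltW | lra].
  have t3' : 0 <= (1 - wp - wm) * (1 - Lf x y) by apply: mulr_ge0; lra.
  have Hsum : wp * (1 - A1) + wm * (1 - A2) + (1 - wp - wm) * (1 - Lf x y) = 0.
    by move: Hf; lra.
  have z1 : wp * (1 - A1) = 0 by lra.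
  have z2 : wm * (1 - A2) = 0 by lra.
  have z3 : (1 - wp - wm) * (1 - Lf x y) = 0 by lra.
  move/eqP: z1; rewrite mulf_eq0 (gt_eqF Hwp) /= subr_eq0 => /eqP eA1.
  move/eqP: z2; rewrite mulf_eq0 (gt_eqF Hwm) /= subr_eq0 => /eqP eA2.
  have c0 : 1 - wp - wm != 0 by apply: lt0r_neq0; lra.
  move/eqP: z3; rewrite mulf_eq0 (negbTE c0) /= subr_eq0 => /eqP eL.
  split; first by apply/HL1.
  split; apply: (Asim_one_inv HLb y); by rewrite -/A1 -/A2.
- move=> [Rel [Hsim Huv]].
  have -> : (fun k => Fbj E1 E2 Lf wp wm k u v) = (fun _ => 1).
    by apply: funext => k; exact: (sim_F1 HL01 HL1 Hwp Hwm Hw Hsim).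
  by apply: cvg_lim => //; exact: cvg_cst.
Qed.
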